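(* Let $A$ be a torsion-free Abelian group with endomorphism ring $E=\mathrm{End}\,A$. Then $E$ is centrally essential if and only if the quasi-endomorphism ring $\mathbb{Q}E=\mathbb{Q}\otimes E$ is centrally essential.
   Context: All rings are associative with non-zero identity. A ring $R$ is centrally essential if for every non-zero $a\in R$ there exist non-zero elements $x,y$ of the center of $R$ with $ax=y$. The quasi-endomorphism ring $\mathbb{Q}E=\mathbb{Q}\otimes\mathrm{End}\,A$ is identified with $\{\alpha\in\mathrm{End}_{\mathbb{Q}}(\mathbb{Q}\otimes A)\mid n\alpha\in\mathrm{End}\,A\text{ for some positive integer } n\}$. *)

(* Defs.v *)
From HB Require Import structures.
From mathcomp Require Import all_boot all_order all_algebra.
Set Implicit Arguments. Unset Strict Implicit. Unset Printing Implicit Defensive.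
Import GRing.Theory.
Local Open Scope ring_scope.

(** A ring whose elements are maps [U -> U] (in a set [S] closed under the ring
    operations), with product = composition [(f g)(u) = f (g u)], zero = zero map,
    and equality of elements = pointwise equality. *)

Definition fun_nonzero (U : zmodType) (f : U -> U) : Prop := exists u, f u != 0.

Definition fun_central (U : zmodType) (S : (U -> U) -> Prop) (x : U -> U) : Prop :=
  S x /\ forall g, S g -> x \o g =1 g \o x.

Definition centrally_essential_fun (U : zmodType) (S : (U -> U) -> Prop) : Prop :=
  forall a, S a -> fun_nonzero a ->
    exists x y, [/\ fun_central S x, fun_central S y, fun_nonzero x, fun_nonzero y
                  & a \o x =1 y].

Definition torsion_free (A : zmodType) : Prop :=
  forall (a : A) (n : nat), a *+ n.+1 = 0 -> a = 0.

Definition is_endo (A : zmodType) (f : A -> A) : Prop :=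
  forall a b, f (a - b) = f a - f b.

(** [V] together with [iota] is (a model of) [Q ⊗ A]: a Q-vector space containing
    [A] (via the injective additive map [iota]) such that every [v] has a positive
    integer multiple in [A]. *)
Definition is_rational_hull (A : zmodType) (V : lmodType rat) (iota : A -> V) : Prop :=
  [/\ forall a b, iota (a - b) = iota a - iota b,
      injective iota
    & forall v : V, exists n : nat, exists a : A, (0 < n)%N /\ v *+ n = iota a].

(** Quasi-endomorphism ring [QE], identified with the Q-linear maps [alpha] of
    [Q ⊗ A] such that [n alpha ∈ End A] for some positive integer [n]. *)
Definition is_quasi_endo (A : zmodType) (V : lmodType rat) (iota : A -> V)
    (alpha : V -> V) : Prop :=
  (forall (c : rat) (u v : V), alpha (c *: u + v) = c *: alpha u + alpha v) /\
  exists n : nat, (0 < n)%N /\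
    forall a : A, exists b : A, (alpha (iota a)) *+ n = iota b.

(* Main.v *)
From HB Require Import structures.
Require Import Defs.
From mathcomp Require Import all_boot all_order all_algebra.
Set Implicit Arguments. Unset Strict Implicit. Unset Printing Implicit Defensive.
Import GRing.Theory Num.Theory.
Local Open Scope ring_scope.

Lemma mulrn_inj (V : lmodType rat) n (u w : V) :
  (0 < n)%N -> u *+ n = w *+ n -> u = w.
Proof.
move=> n0 e; apply: (@scalerI _ _ (n%:R)); first by rewrite pnatr_eq0 -lt0n.
by rewrite /= !scaler_nat.
Qed.

Lemma mulrn_eq0 (V : lmodType rat) n (u : V) :
  (0 < n)%N -> u *+ n = 0 -> u = 0.
Proof. by move=> n0 e; apply: (mulrn_inj n0); rewrite mul0rn. Qed.

Lemma invnK (V : lmodType rat) n (w : V) :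
  (0 < n)%N -> (n%:R^-1 *: w) *+ n = w.
Proof.
move=> n0; rewrite -scaler_nat scalerA mulfV ?scale1r //.
by rewrite pnatr_eq0 -lt0n.
Qed.

Section Add.
Variables (U W : zmodType) (f : U -> W) (fB : GRing.zmod_morphism f).
Let phi : {additive U -> W} := HB.pack f (GRing.isZmodMorphism.Build U W f fB).
Lemma af0 : f 0 = 0. Proof. exact: (raddf0 phi). Qed.
Lemma afD x y : f (x + y) = f x + f y. Proof. exact: (raddfD phi). Qed.
Lemma afN x : f (- x) = - f x. Proof. exact: (raddfN phi). Qed.
Lemma afMn x n : f (x *+ n) = f x *+ n. Proof. exact: (raddfMn phi). Qed.
End Add.

Definition lin (V : lmodType rat) (f : V -> V) :=
  forall (c : rat) (u v : V), f (c *: u + v) = c *: f u + f v.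

Lemma lin_add (V : lmodType rat) (f : V -> V) : lin f -> GRing.zmod_morphism f.
Proof.
move=> fl u v.
have f0 : f 0 = 0.
  have := fl 1 0 0; rewrite !scale1r addr0 => e.
  by apply: (@addIr _ (f 0)); rewrite add0r -e.
have fN w : f (- w) = - f w.
  by have := fl (-1) w 0; rewrite addr0 f0 addr0 !scaleN1r.
by have := fl 1 u (- v); rewrite !scale1r fN.
Qed.

Lemma add_lin (V : lmodType rat) (f : V -> V) : GRing.zmod_morphism f -> lin f.
Proof.
move=> fB c u v; rewrite (afD fB); congr (_ + _).
exact: (rat_linear fB).
Qed.

Lemma lin_scale (V : lmodType rat) (f : V -> V) c u : lin f -> f (c *: u) = c *: f u.
Proof. move/lin_add => fB; exact: (rat_linear fB). Qed.

Lemma lin_comp (V : lmodType rat) (f g : V -> V) : lin f -> lin g -> lin (f \o g).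
Proof. by move=> fl gl c u v /=; rewrite gl fl. Qed.

Lemma lin_sc (V : lmodType rat) (f : V -> V) d : lin f -> lin (fun v => d *: f v).
Proof. by move=> fl c u v /=; rewrite fl scalerDr !scalerA mulrC. Qed.

Lemma lin_eq (A : zmodType) (V : lmodType rat) (iota : A -> V)
  (hv : forall v : V, exists n : nat, exists a : A, (0 < n)%N /\ v *+ n = iota a)
  (f g : V -> V) m : lin f -> lin g -> (0 < m)%N ->
  (forall a, f (iota a) *+ m = g (iota a) *+ m) -> f =1 g.
Proof.
move=> /lin_add fB /lin_add gB m0 e v.
have [k [b [k0 kb]]] := hv v.
apply: (mulrn_inj (n := (k * m)%N)); first by rewrite muln_gt0 k0.
by rewrite !mulrnA -(afMn fB) -(afMn gB) kb e.
Qed.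

Definition restr (A : zmodType) (V : lmodType rat) (iota : A -> V) (f : V -> V) n
  (H : forall a : A, exists b, iota b == f (iota a) *+ n) (a : A) : A :=
  xchoose (H a).

Lemma restrE (A : zmodType) (V : lmodType rat) (iota : A -> V) (f : V -> V) n H a :
  iota (@restr A V iota f n H a) = f (iota a) *+ n.
Proof. exact/eqP/(xchooseP (H a)). Qed.

Lemma restr_endo (A : zmodType) (V : lmodType rat) (iota : A -> V) (f : V -> V) n H :
  GRing.zmod_morphism iota -> injective iota -> lin f ->
  is_endo (@restr A V iota f n H).
Proof.
move=> iB iinj /lin_add fB x y; apply: iinj.
by rewrite (iB) !restrE iB fB mulrnBl.
Qed.

Lemma mk_restr (A : zmodType) (V : lmodType rat) (iota : A -> V) (f : V -> V) m k :
  GRing.zmod_morphism iota ->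
  (forall a, exists b, f (iota a) *+ m = iota b) ->
  forall a : A, exists b, iota b == f (iota a) *+ (m * k).
Proof.
move=> iB h a; have [b e] := h a; exists (b *+ k).
by rewrite (afMn iB) -e mulrnA.
Qed.

Definition ext (A : zmodType) (V : lmodType rat) (iota : A -> V)
  (H : forall v : V, exists p : nat * A, (0 < p.1)%N && (v *+ p.1 == iota p.2))
  (f : A -> A) (v : V) : V :=
  (xchoose (H v)).1%:R^-1 *: iota (f (xchoose (H v)).2).

Lemma ext_spec (A : zmodType) (V : lmodType rat) (iota : A -> V) H (f : A -> A) v k b :
  GRing.zmod_morphism iota -> injective iota -> is_endo f ->
  (0 < k)%N -> v *+ k = iota b -> @ext A V iota H f v *+ k = iota (f b).
Proof.
move=> iB iinj fB k0 vk; rewrite /ext.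
case: (xchoose (H v)) (xchooseP (H v)) => p1 p2 /= /andP[p0 /eqP vp].
have e : p2 *+ k = b *+ p1.
  by apply: iinj; rewrite !(afMn iB) -vp -vk -!mulrnA mulnC.
apply: (mulrn_inj p0); rewrite -mulrnA mulnC mulrnA invnK //.
by rewrite -!(afMn iB) -!(afMn fB) e.
Qed.

Lemma ext_iota (A : zmodType) (V : lmodType rat) (iota : A -> V) H (f : A -> A) a :
  GRing.zmod_morphism iota -> injective iota -> is_endo f ->
  @ext A V iota H f (iota a) = iota (f a).
Proof.
move=> iB iinj fB; rewrite -[LHS]mulr1n.
exact: (@ext_spec A V iota H f (iota a) 1 a iB iinj fB (ltn0Sn 0) (mulr1n _)).
Qed.

Lemma ext_lin (A : zmodType) (V : lmodType rat) (iota : A -> V) H (f : A -> A) :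
  GRing.zmod_morphism iota -> injective iota -> is_endo f ->
  lin (@ext A V iota H f).
Proof.
move=> iB iinj fB; apply: add_lin => u v.
case: (xchooseP (H u)) => /andP[k1 /eqP e1].
case: (xchooseP (H v)) => /andP[k2 /eqP e2].
set p := xchoose (H u) in k1 e1; set q := xchoose (H v) in k2 e2.
have k0 : (0 < p.1 * q.1)%N by rewrite muln_gt0 k1.
apply: (mulrn_inj k0).
have vk : (u - v) *+ (p.1 * q.1) = iota (p.2 *+ q.1 - q.2 *+ p.1).
  by rewrite iB !(afMn iB) -e1 -e2 mulrnBl -!mulrnA [(q.1 * _)%N]mulnC.
rewrite (@ext_spec A V iota H f (u - v) _ _ iB iinj fB k0 vk).
rewrite fB !(afMn fB) iB !(afMn iB) mulrnBl.
rewrite -(@ext_spec A V iota H f u _ _ iB iinj fB k1 e1).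
rewrite -(@ext_spec A V iota H f v _ _ iB iinj fB k2 e2).
by rewrite -!mulrnA [(q.1 * _)%N]mulnC.
Qed.

Lemma ext_central (A : zmodType) (V : lmodType rat) (iota : A -> V) H
  (hv : forall v : V, exists n : nat, exists a : A, (0 < n)%N /\ v *+ n = iota a)
  (x : A -> A) :
  GRing.zmod_morphism iota -> injective iota ->
  fun_central (@is_endo A) x -> fun_central (is_quasi_endo iota) (@ext A V iota H x).
Proof.
move=> iB iinj [xE xc]; split.
  split; first exact: ext_lin.
  by exists 1%N; split => // a; exists (x a); rewrite ext_iota.
move=> g [gl [m [m0 hm]]].
have Hm := mk_restr 1 iB hm; rewrite muln1 in Hm.
apply: (lin_eq hv (lin_comp (ext_lin H iB iinj xE) gl) (lin_comp gl (ext_lin H iB iinj xE)) m0).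
move=> a /=.
have gE := restr_endo Hm iB iinj gl.
rewrite -(afMn (lin_add (ext_lin H iB iinj xE))) -(restrE Hm) ext_iota //.
have := xc _ gE a => /= ->.
by rewrite ext_iota // -(restrE Hm).
Qed.

Lemma restr_nz (A : zmodType) (V : lmodType rat) (iota : A -> V)
  (hv : forall v : V, exists n : nat, exists a : A, (0 < n)%N /\ v *+ n = iota a)
  (X : V -> V) N H :
  GRing.zmod_morphism iota -> lin X -> (0 < N)%N ->
  fun_nonzero X -> fun_nonzero (@restr A V iota X N H).
Proof.
move=> iB Xl N0 [v nz]; have [k [b [k0 e]]] := hv v.
exists b; apply/eqP => r0; move/eqP: nz; apply.
have := restrE H b; rewrite r0 (af0 iB) => /esym/(mulrn_eq0 N0).
by rewrite -e (afMn (lin_add Xl)) => /(mulrn_eq0 k0).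
Qed.

Theorem proposition3p2 (A : zmodType) (V : lmodType rat) (iota : A -> V) :
  torsion_free A -> is_rational_hull iota ->
  (centrally_essential_fun (@is_endo A) <->
   centrally_essential_fun (is_quasi_endo iota)).
Proof.
move=> _ [iB iinj hv].
have H : forall v : V, exists p : nat * A, (0 < p.1)%N && (v *+ p.1 == iota p.2).
  by move=> v; have [n [a [n0 e]]] := hv v; exists (n, a); rewrite n0 e eqxx.
have i0 : forall a, iota a = 0 -> a = 0.
  by move=> a e; apply: iinj; rewrite e (af0 iB).
split.
- move=> CE alpha [al [n [n0 hn]]] anz.
  have Hn := mk_restr 1 iB hn; rewrite muln1 in Hn.
  set a := restr Hn.
  have aE : is_endo a by exact: restr_endo.
  have [x [y [xc yc xnz ynz axy]]] := CE a aE (restr_nz hv Hn iB al n0 anz).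
  have [[xE _] [yE _]] := (xc, yc).
  exists (ext H x), (fun v => n%:R^-1 *: ext H y v).
  have Yc := ext_central H hv iB iinj yc.
  split.
  + exact: ext_central.
  + split.
      split; first exact: lin_sc (ext_lin H iB iinj yE).
      exists n; split => // b; exists (y b).
      by rewrite invnK // ext_iota.
    move=> g gQ v /=; have [gl _] := gQ.
    by rewrite (lin_scale _ _ gl); congr (_ *: _); apply: (Yc.2 g gQ).
  + case: xnz => b nz; exists (iota b); rewrite ext_iota //.
    by apply/eqP => /i0 /eqP; apply/negP.
  + case: ynz => b nz; exists (iota b); rewrite ext_iota //.
    rewrite scaler_eq0 negb_or invr_eq0 pnatr_eq0 -lt0n n0 /=.
    by apply/eqP => /i0 /eqP; apply/negP.
  + apply: (lin_eq hv (lin_comp al (ext_lin H iB iinj xE))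
             (lin_sc _ (ext_lin H iB iinj yE)) n0) => b /=.
    rewrite ext_iota // -(restrE Hn). have := axy b; rewrite /= /a => ->.
    by rewrite invnK // ext_iota.
- move=> CE a aE [u0 nz].
  have al := ext_lin H iB iinj aE.
  have aQ : is_quasi_endo iota (ext H a).
    by split => //; exists 1%N; split => // b; exists (a b); rewrite ext_iota.
  have anz : fun_nonzero (ext H a).
    exists (iota u0); rewrite ext_iota //.
    by apply/eqP => /i0 /eqP; apply/negP.
  have [X [Y [[XQ Xc] [YQ Yc] Xnz Ynz aXY]]] := CE _ aQ anz.
  have [Xl [mx [mx0 hx]]] := XQ.
  have [Yl [my [my0 hy]]] := YQ.
  have HX := mk_restr my iB hx.
  have HY := mk_restr mx iB hy.
  rewrite mulnC in HY.
  have N0 : (0 < mx * my)%N by rewrite muln_gt0 mx0.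
  have restr_c : forall Z (HZ : forall a, exists b, iota b == Z (iota a) *+ (mx * my)),
      is_quasi_endo iota Z -> (forall g, is_quasi_endo iota g -> Z \o g =1 g \o Z) ->
      fun_central (@is_endo A) (restr HZ).
    move=> Z HZ [Zl _] Zc; split; first exact: restr_endo.
    move=> g gE b /=; apply: (iinj).
    have gQ : is_quasi_endo iota (ext H g).
      split; first exact: (ext_lin H iB iinj gE).
      by exists 1%N; split => // c; exists (g c); rewrite ext_iota.
    rewrite restrE -(ext_iota H _ iB iinj gE); have := Zc _ gQ (iota b) => /= ->.
    by rewrite -(afMn (lin_add (ext_lin H iB iinj gE))) -(restrE HZ) ext_iota.
  exists (restr HX), (restr HY); split.
  + exact: restr_c.
  + exact: restr_c.
  + exact: restr_nz.
  + exact: restr_nz.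
  + move=> b /=; apply: (iinj).
    rewrite -(ext_iota H _ iB iinj aE) (restrE HX) (afMn (lin_add al)) (restrE HY).
    by have := aXY (iota b) => /= ->.
Qed.
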